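(* Let $a>b>0$ be real numbers with $a/b$ irrational, and let $A,B,C$ be positive integers such that one of the following holds: (i) $A a^2+C b^2=B\,a\,b$ (equation in defect); (ii) $A a^2+B\,a\,b=C b^2$; (iii) $A a^2=C b^2$. Let $e_{-1}=a,\ e_0=b,\ e_1,e_2,\dots$ be the anthyphairetic remainders of $a$ to $b$. Then there exist an index $n\ge 0$ and positive integers $A',B',C'$ such that $A' e_n^2=B'\,e_n\,e_{n+1}+C' e_{n+1}^2$, i.e. after finitely many anthyphairetic substitutions the equation becomes a quadratic equation in excess.
   Context: For positive reals $a,b$, the anthyphairesis of $a$ to $b$ is the Euclidean subtraction algorithm: set $e_{-1}=a$, $e_0=b$, and for $i\ge 0$, as long as $e_i>0$, write $e_{i-1}=k_i e_i+e_{i+1}$ with $k_i$ a nonnegative integer and $0\le e_{i+1}<e_i$; the process stops if some remainder is $0$ (which never happens when $a/b$ is irrational). The $e_i$ are the anthyphairetic remainders. An anthyphairetic substitution replaces $e_{i-1}$ by $k_ie_i+e_{i+1}$ in a quadratic relation between $e_{i-1}$ and $e_i$, producing a quadratic relation between $e_i$ and $e_{i+1}$. *)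

(* Defs.v *)
From Stdlib Require Import Reals ZArith.
Open Scope R_scope.

(* One step of the anthyphairesis: (e_{i-1}, e_i) |-> (e_i, e_{i+1}),
   where e_{i-1} = k_i e_i + e_{i+1}, k_i = floor(e_{i-1}/e_i), 0 <= e_{i+1} < e_i. *)
Definition anth_step (p : R * R) : R * R :=
  let (x, y) := p in (y, x - IZR (Int_part (x / y)) * y).

(* anth_pair a b n = (e_{n-1}, e_n), starting from (e_{-1}, e_0) = (a, b). *)
Definition anth_pair (a b : R) (n : nat) : R * R := Nat.iter n anth_step (a, b).

Definition anth_rem (a b : R) (n : nat) : R := snd (anth_pair a b n).

Definition irrational (x : R) : Prop :=
  ~ exists p q : Z, q <> 0%Z /\ x = IZR p / IZR q.

(* Main.v *)
Require Import Defs.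
From Stdlib Require Import Reals ZArith Lra Lia Psatz.
Open Scope R_scope.

Definition Good (p : R * R) : Prop :=
  0 < snd p < fst p /\ irrational (fst p / snd p).

Definition Exc (p : R * R) : Prop :=
  exists A B C : Z, (0 < A)%Z /\ (0 < B)%Z /\ (0 < C)%Z /\
    IZR A * fst p ^ 2 = IZR B * fst p * snd p + IZR C * snd p ^ 2.

Lemma step_good x y : 0 < y < x -> irrational (x / y) ->
  (1 <= Int_part (x / y))%Z /\ 0 < x - IZR (Int_part (x / y)) * y < y /\
  irrational (y / (x - IZR (Int_part (x / y)) * y)).
Proof.
  intros [Hy Hxy] Hirr.
  set (k := Int_part (x / y)).
  destruct (base_Int_part (x / y)) as [H1 H2]. fold k in H1, H2.
  assert (Hk1 : IZR k * y <= x).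
  { apply (Rmult_le_compat_r y) in H1; [|lra].
    replace (x / y * y) with x in H1 by (field; lra). lra. }
  assert (Hk2 : x < IZR k * y + y).
  { assert (x / y < IZR k + 1) by lra.
    apply (Rmult_lt_compat_r y) in H; [|lra].
    replace (x / y * y) with x in H by (field; lra). lra. }
  assert (Hxy1 : 1 < x / y).
  { apply (Rmult_lt_reg_r y); [lra|]. replace (x / y * y) with x by (field; lra). lra. }
  assert (Hk : (1 <= k)%Z).
  { assert (0 < k)%Z by (apply lt_IZR; lra). lia. }
  assert (Hz0 : x - IZR k * y <> 0).
  { intro Hz. apply Hirr. exists k, 1%Z. split; [lia|].
    replace x with (IZR k * y) by lra. field. lra. }
  assert (Hz : 0 < x - IZR k * y).
  { assert (Hz1 : 0 <= x - IZR k * y) by lra.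
    destruct (Rle_lt_or_eq _ _ Hz1) as [h|h]; [exact h| exfalso; apply Hz0; auto]. }
  split; [exact Hk|]. split; [lra|].
  intros [p [q [Hq Hpq]]].
  set (z := x - IZR k * y) in *.
  assert (Hq' : IZR q <> 0) by (apply not_0_IZR; exact Hq).
  assert (Hp' : IZR p <> 0).
  { intro Hp. rewrite Hp in Hpq. assert (y / z > 0) by (apply Rdiv_lt_0_compat; lra).
    rewrite Hpq in H. unfold Rdiv in H. lra. }
  assert (E : y * IZR q = IZR p * z).
  { assert (y = IZR p / IZR q * z) by (rewrite <- Hpq; field; lra).
    rewrite H. field. exact Hq'. }
  apply Hirr. exists (k * p + q)%Z, p. split.
  { intro. subst p. apply Hp'. reflexivity. }
  rewrite plus_IZR, mult_IZR.
  assert (Ex : x = z + IZR k * y) by (unfold z; ring).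
  rewrite Ex. field_simplify_eq; [|lra..]. nra.
Qed.

Lemma pos_coef (c : Z) (y v : R) : 0 < y -> 0 < v -> IZR c * y ^ 2 = v -> (0 < c)%Z.
Proof.
  intros Hy Hv E. apply lt_IZR. destruct (Rle_or_lt (IZR c) 0) as [H|H]; [|exact H].
  assert (IZR c * y ^ 2 <= 0). { assert (0 < y ^ 2) by nra. nra. } lra.
Qed.

Lemma case3 p A C : Good p -> (0 < A)%Z -> (0 < C)%Z ->
  IZR A * fst p ^ 2 = IZR C * snd p ^ 2 -> Exc (anth_step p).
Proof.
  destruct p as [x y]. unfold Good; simpl. intros [Hxy Hirr] HA HC E.
  destruct (step_good x y Hxy Hirr) as [Hk [Hz _]].
  set (k := Int_part (x / y)) in *.
  set (z := x - IZR k * y) in *.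
  assert (Ex : x = z + IZR k * y) by (unfold z; ring).
  unfold Exc; simpl. fold k. fold z.
  assert (I : IZR (C - A * k * k) * y ^ 2 = IZR (2 * A * k) * y * z + IZR A * z ^ 2).
  { rewrite minus_IZR, !mult_IZR. rewrite Ex in E. lra. }
  exists (C - A * k * k)%Z, (2 * A * k)%Z, A.
  split; [|split; [lia|split; [lia|exact I]]].
  apply (pos_coef _ y (IZR (2 * A * k) * y * z + IZR A * z ^ 2)); [lra| |exact I].
  rewrite !mult_IZR. assert (0 < IZR A) by (apply IZR_lt; lia).
  assert (0 < IZR k) by (apply (IZR_lt 0 k); lia).
  assert (0 < y * z) by nra. assert (0 < z ^ 2) by nra. assert (0 < IZR A * IZR k) by nra. nra.
Qed.

Lemma case2 p A B C : Good p -> (0 < A)%Z -> (0 < B)%Z -> (0 < C)%Z ->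
  IZR A * fst p ^ 2 + IZR B * fst p * snd p = IZR C * snd p ^ 2 -> Exc (anth_step p).
Proof.
  destruct p as [x y]. unfold Good; simpl. intros [Hxy Hirr] HA HB HC E.
  destruct (step_good x y Hxy Hirr) as [Hk [Hz _]].
  set (k := Int_part (x / y)) in *.
  set (z := x - IZR k * y) in *.
  assert (Ex : x = z + IZR k * y) by (unfold z; ring).
  unfold Exc; simpl. fold k. fold z.
  assert (I : IZR (C - A * k * k - B * k) * y ^ 2 = IZR (2 * A * k + B) * y * z + IZR A * z ^ 2).
  { rewrite !minus_IZR, plus_IZR, !mult_IZR. rewrite Ex in E. lra. }
  exists (C - A * k * k - B * k)%Z, (2 * A * k + B)%Z, A.
  split; [|split; [lia|split; [lia|exact I]]].
  apply (pos_coef _ y (IZR (2 * A * k + B) * y * z + IZR A * z ^ 2)); [lra| |exact I].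
  rewrite plus_IZR, !mult_IZR. assert (0 < IZR A) by (apply IZR_lt; lia).
  assert (0 < IZR B) by (apply IZR_lt; lia).
  assert (0 < IZR k) by (apply IZR_lt; lia).
  assert (0 < y * z) by nra. assert (0 < z ^ 2) by nra. assert (0 < IZR A * IZR k) by nra. nra.
Qed.

Lemma case1 p A B C : Good p -> (0 < A)%Z -> (0 < B)%Z -> (0 < C)%Z ->
  IZR A * fst p ^ 2 + IZR C * snd p ^ 2 = IZR B * fst p * snd p ->
  Good (anth_step p) /\
  (Exc (anth_step p) \/
   (exists A' B' C', (0 < A')%Z /\ (0 < B')%Z /\ (0 < C')%Z /\
     IZR A' * fst (anth_step p) ^ 2 + IZR B' * fst (anth_step p) * snd (anth_step p)
       = IZR C' * snd (anth_step p) ^ 2) \/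
   (exists A' C', (0 < A')%Z /\ (0 < C')%Z /\
     IZR A' * fst (anth_step p) ^ 2 = IZR C' * snd (anth_step p) ^ 2) \/
   (exists A' B' C', (0 < A')%Z /\ (0 < B')%Z /\ (0 < C')%Z /\ (B' < B)%Z /\
     IZR A' * fst (anth_step p) ^ 2 + IZR C' * snd (anth_step p) ^ 2
       = IZR B' * fst (anth_step p) * snd (anth_step p))).
Proof.
  destruct p as [x y]. unfold Good; simpl. intros [Hxy Hirr] HA HB HC E.
  destruct (step_good x y Hxy Hirr) as [Hk [Hz Hirr2]].
  set (k := Int_part (x / y)) in *.
  set (z := x - IZR k * y) in *.
  assert (Ex : x = z + IZR k * y) by (unfold z; ring).
  split; [split; [lra|exact Hirr2]|].
  unfold Exc; simpl. fold k. fold z.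
  set (P := (A * k * k + C - B * k)%Z).
  set (Q := (2 * A * k - B)%Z).
  assert (I : IZR P * y ^ 2 + IZR Q * y * z + IZR A * z ^ 2 = 0).
  { unfold P, Q. rewrite !minus_IZR, !plus_IZR, !mult_IZR. rewrite Ex in E. lra. }
  assert (Hy : 0 < y) by lra.
  destruct (Z.lt_trichotomy P 0) as [HP|[HP|HP]];
  [destruct (Z.lt_trichotomy Q 0) as [HQ|[HQ|HQ]]| |].
  - right; left. exists (- P)%Z, (- Q)%Z, A. split; [lia|split;[lia|split;[lia|]]].
    rewrite !opp_IZR. lra.
  - right; right; left. exists (- P)%Z, A. split; [lia|split;[lia|]].
    rewrite opp_IZR. rewrite HQ in I. lra.
  - left. exists (- P)%Z, Q, A. split; [lia|split;[lia|split;[lia|]]].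
    rewrite opp_IZR. lra.
  - exfalso. rewrite HP in I. apply Hirr2.
    assert (HQ : Q <> 0%Z).
    { intro HQ. rewrite HQ in I. assert (0 < IZR A) by (apply IZR_lt; lia).
      assert (0 < z ^ 2) by nra. nra. }
    exists A, (- Q)%Z. split; [lia|].
    assert (E2 : IZR Q * y + IZR A * z = 0).
    { apply (Rmult_eq_reg_r z); [|lra]. lra. }
    rewrite opp_IZR. assert (IZR Q <> 0) by (apply not_0_IZR; exact HQ).
    field_simplify_eq; [|lra..]. lra.
  - assert (HQ : (Q < 0)%Z).
    { destruct (Z.lt_ge_cases Q 0) as [h|h]; [exact h|exfalso].
      assert (0 < IZR P) by (apply IZR_lt; lia).
      assert (0 <= IZR Q) by (apply IZR_le; lia).
      assert (0 < IZR A) by (apply IZR_lt; lia).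
      assert (0 < y ^ 2) by nra. assert (0 < z ^ 2) by nra. assert (0 < y * z) by nra.
      assert (0 <= IZR Q * (y * z)) by nra. nra. }
    right; right; right. exists P, (- Q)%Z, A.
    split; [lia|split;[lia|split;[lia|split;[unfold Q; lia|]]]].
    rewrite opp_IZR. lra.
Qed.

Lemma main_ind a b : forall N (n : nat) A B C, (Z.to_nat B <= N)%nat ->
  Good (anth_pair a b n) -> (0 < A)%Z -> (0 < B)%Z -> (0 < C)%Z ->
  IZR A * fst (anth_pair a b n) ^ 2 + IZR C * snd (anth_pair a b n) ^ 2
    = IZR B * fst (anth_pair a b n) * snd (anth_pair a b n) ->
  exists m, Exc (anth_pair a b (S m)).
Proof.
  induction N as [|N IH]; intros n A B C HN HG HA HB HC E.
  - lia.
  - destruct (case1 _ A B C HG HA HB HC E) as [HG' [H|[H|[H|H]]]].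
    + exists n. exact H.
    + destruct H as [A' [B' [C' [h1 [h2 [h3 h4]]]]]].
      exists (S n). exact (case2 _ A' B' C' HG' h1 h2 h3 h4).
    + destruct H as [A' [C' [h1 [h3 h4]]]].
      exists (S n). exact (case3 _ A' C' HG' h1 h3 h4).
    + destruct H as [A' [B' [C' [h1 [h2 [h3 [h5 h4]]]]]]].
      apply (IH (S n) A' B' C'); try assumption. lia.
Qed.

Theorem proposition6p2p3 (a b : R) (A B C : nat) :
  0 < b -> b < a -> irrational (a / b) ->
  (0 < A)%nat -> (0 < B)%nat -> (0 < C)%nat ->
  (INR A * a ^ 2 + INR C * b ^ 2 = INR B * a * b \/
   INR A * a ^ 2 + INR B * a * b = INR C * b ^ 2 \/
   INR A * a ^ 2 = INR C * b ^ 2) ->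
  exists (n : nat) (A' B' C' : nat),
    (0 < A')%nat /\ (0 < B')%nat /\ (0 < C')%nat /\
    INR A' * anth_rem a b n ^ 2
      = INR B' * anth_rem a b n * anth_rem a b (S n)
        + INR C' * anth_rem a b (S n) ^ 2.
Proof.
  intros Hb Hab Hirr HA HB HC Hcase.
  assert (HG : Good (anth_pair a b 0)) by (unfold Good; simpl; split; [lra|exact Hirr]).
  assert (Hex : exists m, Exc (anth_pair a b (S m))).
  { rewrite !INR_IZR_INZ in Hcase.
    destruct Hcase as [E|[E|E]].
    - apply (main_ind a b (Z.to_nat (Z.of_nat B)) 0 (Z.of_nat A) (Z.of_nat B) (Z.of_nat C));
        auto; lia.
    - exists 0%nat. apply (case2 _ (Z.of_nat A) (Z.of_nat B) (Z.of_nat C) HG); auto; lia.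
    - exists 0%nat. apply (case3 _ (Z.of_nat A) (Z.of_nat C) HG); auto; lia. }
  destruct Hex as [m [A' [B' [C' [h1 [h2 [h3 h4]]]]]]].
  exists m, (Z.to_nat A'), (Z.to_nat B'), (Z.to_nat C').
  split; [lia|split;[lia|split;[lia|]]].
  rewrite !INR_IZR_INZ, !Z2Nat.id; try lia.
  unfold anth_rem. change (anth_pair a b (S m)) with (anth_step (anth_pair a b m)) in *.
  destruct (anth_pair a b m) as [x y]. simpl in h4 |- *. exact h4.
Qed.
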